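(* Let $P$ be a convex polygon with no two edges parallel, and let $e_i\prec e_j$. Then $\mathrm{disprod}_{\ell_i,\ell_j}$ is strictly unimodal on $[v_{j+1}\circlearrowright v_i]$: $\mathrm{disprod}_{\ell_i,\ell_j}(X)$ strictly increases as $X$ travels clockwise along $\partial P$ from $v_{j+1}$ to $Z_i^j$, and strictly decreases as $X$ travels clockwise along $\partial P$ from $Z_i^j$ to $v_i$.
   Context: $P$ is a compact convex polygon with boundary $\partial P$, edges $e_1,\ldots,e_n$ in clockwise order and vertices $v_1,\ldots,v_n$, $e_i$ being the open segment from $v_i$ to $v_{i+1}$ (indices mod $n$). $\ell_i$ is the line containing $e_i$, $\mathsf{I}_{i,j}=\ell_i\cap\ell_j$. $d_l(X)$ is the distance from $X$ to the line $l$, and $\mathrm{disprod}_{l,l'}(X)=d_l(X)d_{l'}(X)$. For distinct edges, $e_i\prec e_j$ means $\mathsf{I}_{i,j}=v_i+t(v_{i+1}-v_i)$ for some $t\ge1$ (i.e. $\mathsf{I}_{i,j}$ lies between $e_i$ and $e_j$ clockwise; equivalently the clockwise turning angle from direction $v_{i+1}-v_i$ to $v_{j+1}-v_j$ is in $(0,\pi)$). For $e_i\prec e_j$, $Z_i^j$ denotes the unique point of $P$ at which $\mathrm{disprod}_{\ell_i,\ell_j}$ attains its maximum over $P$ (it lies on $\partial P$). $[X\circlearrowright X']$ is the closed portion of $\partial P$ from $X$ clockwise to $X'$. *)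

(* Defs.v *)
From mathcomp Require Import all_boot all_order all_algebra.
Set Implicit Arguments. Unset Strict Implicit. Unset Printing Implicit Defensive.
Import Order.TTheory GRing.Theory Num.Theory.
Local Open Scope ring_scope.

Section Geom.
Variable R : rcfType.
Definition pt := (R * R)%type.

Definition padd (a b : pt) : pt := (a.1 + b.1, a.2 + b.2).
Definition psub (a b : pt) : pt := (a.1 - b.1, a.2 - b.2).
Definition pscale (s : R) (a : pt) : pt := (s * a.1, s * a.2).
Definition cross (a b : pt) : R := a.1 * b.2 - a.2 * b.1.
Definition dot (a b : pt) : R := a.1 * b.1 + a.2 * b.2.

Definition V (v : nat -> pt) (n k : nat) : pt := v (k %% n)%N.
Definition edir (v : nat -> pt) (n k : nat) : pt := psub (V v n k.+1) (V v n k).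

(* Convex polygon with vertices listed in clockwise order: every other
   vertex lies strictly to the right of each directed edge v_i -> v_{i+1}. *)
Definition convex_cw_polygon (v : nat -> pt) (n : nat) : Prop :=
  (3 <= n)%N /\
  forall i k, (i < n)%N -> (k < n)%N -> k != i -> k != (i.+1 %% n)%N ->
    cross (edir v n i) (psub (v k) (V v n i)) < 0.

Definition inP (v : nat -> pt) (n : nat) (X : pt) : Prop :=
  forall i, (i < n)%N -> cross (edir v n i) (psub X (V v n i)) <= 0.

Definition no_parallel_edges (v : nat -> pt) (n : nat) : Prop :=
  forall i j, (i < n)%N -> (j < n)%N -> i != j -> cross (edir v n i) (edir v n j) != 0.

Definition dist_line (A B X : pt) : R :=
  `| cross (psub B A) (psub X A) | / Num.sqrt (dot (psub B A) (psub B A)).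

Definition dl (v : nat -> pt) (n k : nat) (X : pt) : R :=
  dist_line (V v n k) (V v n k.+1) X.

Definition disprod (v : nat -> pt) (n i j : nat) (X : pt) : R :=
  dl v n i X * dl v n j X.

Definition on_line (v : nat -> pt) (n k : nat) (X : pt) : Prop :=
  cross (edir v n k) (psub X (V v n k)) = 0.

Definition prec (v : nat -> pt) (n i j : nat) : Prop :=
  i != j /\
  exists t : R, 1 <= t /\ on_line v n j (padd (V v n i) (pscale t (edir v n i))).

Definition arc_len (n a b : nat) : nat := ((b + n - a) %% n)%N.

(* on_arc v n a b t X : X is the point of the clockwise boundary arc
   [v_a -> v_b] at arc parameter t in [0, arc_len n a b]; the parameter
   k + s (k in nat, s in [0,1]) denotes the point v_{a+k} + s (v_{a+k+1} - v_{a+k}). *)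
Definition on_arc (v : nat -> pt) (n a b : nat) (t : R) (X : pt) : Prop :=
  exists (k : nat) (s : R),
    ((k < arc_len n a b)%N \/ (k = arc_len n a b /\ s = 0)) /\
    0 <= s /\ s <= 1 /\ t = k%:R + s /\
    X = padd (V v n (a + k)%N) (pscale s (edir v n (a + k)%N)).

End Geom.

(* Main.v *)
Require Import Defs.
From mathcomp Require Import all_boot all_order all_algebra.
From mathcomp Require Import ring lra zify.
Import Order.TTheory GRing.Theory Num.Theory.
Local Open Scope ring_scope.
Set Implicit Arguments. Unset Strict Implicit. Unset Printing Implicit Defensive.

Section S.
Variable R : rcfType.
Variable v : nat -> pt R.
Variable n : nat.
Hypothesis n_gt0 : (0 < n)%N.

Definition Af (k : nat) (X : pt R) : R := - cross (edir v n k) (psub X (V v n k)).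

Lemma Vmod (x y : nat) : (x %% n = y %% n)%N -> V v n x = V v n y.
Proof. by rewrite /V => ->. Qed.

Lemma modS x y : (x %% n = y %% n)%N -> (x.+1 %% n = y.+1 %% n)%N.
Proof. by move=> h; rewrite -[x.+1]addn1 -[y.+1]addn1 -modnDml h modnDml. Qed.

Lemma edirmod (x y : nat) : (x %% n = y %% n)%N -> edir v n x = edir v n y.
Proof. by move=> h; rewrite /edir (Vmod h) (Vmod (modS h)). Qed.

Lemma Amod x y X : (x %% n = y %% n)%N -> Af x X = Af y X.
Proof. by move=> h; rewrite /Af (Vmod h) (edirmod h). Qed.

Lemma VS k : V v n k.+1 = padd (V v n k) (edir v n k).
Proof.
rewrite /padd /edir /psub; case: (V v n k.+1) => a b; case: (V v n k) => c d /=.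
by congr (_,_); ring.
Qed.

Lemma A_move k P d s : Af k (padd P (pscale s d)) = Af k P - s * cross (edir v n k) d.
Proof.
rewrite /Af /padd /pscale /psub /cross; case: P => a b; case: d => c e.
case: (edir v n k) => x y; case: (V v n k) => z w /=; ring.
Qed.

Lemma A_add k P d : Af k (padd P d) = Af k P - cross (edir v n k) d.
Proof.
rewrite /Af /padd /psub /cross; case: P => a b; case: d => c e.
case: (edir v n k) => x y; case: (V v n k) => z w /=; ring.
Qed.

Lemma A_self k : Af k (V v n k) = 0.
Proof. rewrite /Af /psub /cross; case: (edir v n k) => x y; case: (V v n k) => z w /=; ring. Qed.

Lemma A_selfS k : Af k (V v n k.+1) = 0.
Proof.
have := A_move k (V v n k) (edir v n k) 1.
have -> : padd (V v n k) (pscale 1 (edir v n k)) = V v n k.+1.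
  rewrite VS /padd /pscale; case: (edir v n k) => a b /=; by rewrite !mul1r.
rewrite A_self /cross; case: (edir v n k) => a b /= ->; ring.
Qed.

Hypothesis hconv : convex_cw_polygon v n.

Lemma conv_pos p k : (p %% n != k %% n)%N -> (p %% n != k.+1 %% n)%N -> 0 < Af k (V v n p).
Proof.
move=> h1 h2; case: hconv => _ H.
have := H (k %% n)%N (p %% n)%N (ltn_pmod _ n_gt0) (ltn_pmod _ n_gt0) h1.
have e : ((k %% n) %% n = k %% n)%N by rewrite modn_mod.
rewrite (modS e) => /(_ h2).
rewrite /Af (edirmod e) (Vmod e) /V. rewrite oppr_gt0. done.
Qed.

Lemma conv_nonneg p k : 0 <= Af k (V v n p).
Proof.
case: (eqVneq (p %% n)%N (k %% n)%N) => h1.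
  by rewrite (Vmod h1) A_self.
case: (eqVneq (p %% n)%N (k.+1 %% n)%N) => h2.
  by rewrite (Vmod h2) A_selfS.
exact/ltW/conv_pos.
Qed.


Lemma neq_mod x y : (x < y)%N -> (y < x + n)%N -> (x %% n != y %% n)%N.
Proof.
move=> h1 h2; apply/eqP => e.
have hy : y = (x + (y - x))%N by lia.
have := eqn_modDl x (y - x) 0 n. rewrite addn0 -hy e eqxx mod0n modn_small; lia.
Qed.

Lemma cross_sub_A k X : cross (edir v n k) (psub X (V v n k)) = - Af k X.
Proof. by rewrite /Af opprK. Qed.

Lemma fan1 p q : (p %% n != q %% n)%N -> (p %% n != q.+1 %% n)%N ->
  cross (psub (V v n q) (V v n p)) (psub (V v n q.+1) (V v n p)) < 0.
Proof.
move=> h1 h2; have := conv_pos h1 h2.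
rewrite VS /Af /padd /psub /cross; case: (edir v n q) => a b; case: (V v n q) => c d;
  case: (V v n p) => e f /= h.
have -> : (c - e) * (d + b - f) - (d - f) * (c + a - e) = - (- (a * (f - d) - b * (e - c))) by ring.
by rewrite oppr_lt0.
Qed.

Lemma cross3 (a b c d : pt R) :
  cross a c * cross d b = cross a b * cross d c + cross b c * cross d a.
Proof. rewrite /cross; case: a => ? ?; case: b => ? ?; case: c => ? ?; case: d => ? ? /=; ring. Qed.

Lemma fan p q k : (p < q)%N -> (q + k.+1 < p + n)%N ->
  cross (psub (V v n q) (V v n p)) (psub (V v n (q + k.+1)) (V v n p)) < 0.
Proof.
move=> hpq; elim: k => [|k IH] hr.
  rewrite addn1; apply: fan1; apply: neq_mod; lia.
have IH' := IH ltac:(lia).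
rewrite addnS.
set r := (q + k.+1)%N in IH' *.
have hb := @fan1 p r ltac:(apply: neq_mod; lia) ltac:(apply: neq_mod; lia).
set a := psub (V v n q) (V v n p) in IH' *.
set b := psub (V v n r) (V v n p) in IH' hb *.
set c := psub (V v n r.+1) (V v n p) in hb *.
have hdb : cross (edir v n p) b < 0.
  rewrite /b cross_sub_A oppr_lt0; apply: conv_pos; rewrite eq_sym; apply: neq_mod; lia.
have hdc : cross (edir v n p) c < 0.
  rewrite /c cross_sub_A oppr_lt0; apply: conv_pos; rewrite eq_sym; apply: neq_mod; lia.
have hda : cross (edir v n p) a <= 0.
  by rewrite /a cross_sub_A oppr_le0; apply: conv_nonneg.
have := cross3 a b c (edir v n p).
set X := cross a c; set Y := cross (edir v n p) b; move=> e.
have hpos : 0 < X * Y by rewrite e; nra.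
have hY : Y < 0 by [].
nra.
Qed.


Lemma bary (d P I B J M : pt R) :
  cross (psub B I) (psub J I) * cross d (psub M P) =
  cross (psub B I) (psub J I) * cross d (psub I P)
  + cross (psub M I) (psub J I) * (cross d (psub B P) - cross d (psub I P))
  + cross (psub B I) (psub M I) * (cross d (psub J P) - cross d (psub I P)).
Proof.
rewrite /cross /psub; case: d => ? ?; case: P => ? ?; case: I => ? ?; case: B => ? ?;
  case: J => ? ?; case: M => ? ? /=; ring.
Qed.

Lemma baryA k (I B J M : pt R) :
  cross (psub B I) (psub J I) * Af k M =
  cross (psub B I) (psub J I) * Af k I
  + cross (psub M I) (psub J I) * (Af k B - Af k I)
  + cross (psub B I) (psub M I) * (Af k J - Af k I).
Proof.
rewrite /Af /cross /psub; case: (edir v n k) => ? ?; case: (V v n k) => ? ?; case: I => ? ?; case: B => ? ?;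
  case: J => ? ?; case: M => ? ? /=; ring.
Qed.

Lemma inj2 (d1 d2 Y : pt R) : cross d1 d2 != 0 -> cross d1 Y = 0 -> cross d2 Y = 0 -> Y = (0, 0).
Proof.
case: d1 => a b; case: d2 => c d; case: Y => x y; rewrite /cross /= => h e1 e2.
have h1 : (a * d - b * c) * x = 0.
  have -> : (a * d - b * c) * x = c * (a * y - b * x) - a * (c * y - d * x) by ring.
  by rewrite e1 e2; ring.
have h2 : (a * d - b * c) * y = 0.
  have -> : (a * d - b * c) * y = d * (a * y - b * x) - b * (c * y - d * x) by ring.
  by rewrite e1 e2; ring.
move/eqP: h1; move/eqP: h2; rewrite !mulf_eq0 (negbTE h) /= => /eqP -> /eqP -> //.
Qed.

Lemma pluecker m i j (X I : pt R) :
  cross (edir v n i) (edir v n j) * (Af m X - Af m I) =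
  cross (edir v n i) (edir v n m) * (Af j X - Af j I)
  - cross (edir v n j) (edir v n m) * (Af i X - Af i I).
Proof.
rewrite /Af /cross /psub; case: (edir v n i) => ? ?; case: (edir v n j) => ? ?;
  case: (edir v n m) => ? ?; case: (V v n i) => ? ?; case: (V v n j) => ? ?;
  case: (V v n m) => ? ?; case: X => ? ?; case: I => ? ? /=; ring.
Qed.


Lemma cross_DI (B J I : pt R) : cross (psub B I) (psub J I) = cross (psub J B) (psub I B).
Proof. rewrite /cross /psub; case: B => ? ?; case: J => ? ?; case: I => ? ? /=; ring. Qed.

Lemma cross_0r (d B : pt R) : cross d (psub B B) = 0.
Proof. rewrite /cross /psub; case: B => ? ?; case: d => ? ? /=; ring. Qed.

Lemma cross_nn (J B : pt R) : cross (psub J B) (psub J B) = 0.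
Proof. rewrite /cross /psub; case: B => ? ?; case: J => ? ? /=; ring. Qed.

Ltac clear_mod := repeat match goal with H : context [(_ %% _)%N] |- _ => clear H end.

Lemma conv_pos' p k : (k.+1 < p)%N -> (p < k + n)%N -> 0 < Af k (V v n p).
Proof.
move=> h1 h2; apply: conv_pos; rewrite eq_sym; apply: neq_mod; lia.
Qed.

Lemma far_arith (D x y Ai Aj CMv AiJ AjB AmI AmB AmJ : R) :
 0 < D -> 0 < AiJ -> 0 < AjB -> 0 < AmB -> 0 < AmJ -> 0 <= Ai -> 0 <= Aj -> CMv < 0 ->
 D * Ai = D * 0 + x * (0 - 0) + y * (AiJ - 0) ->
 D * Aj = D * 0 + x * (AjB - 0) + y * (0 - 0) ->
 D * CMv = D * D + x * (0 - D) + y * (0 - D) ->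
 D * 0 = D * AmI + x * (AmB - AmI) + y * (AmJ - AmI) -> 0 < AmI.
Proof.
move=> hD hiJ hjB hmB hmJ hAi hAj hCM bi bj bC bm.
have hy : 0 <= y.
  have : 0 <= y * AiJ by rewrite (_ : y * AiJ = D * Ai); [nra | rewrite bi; ring].
  by rewrite pmulr_lge0.
have hx : 0 <= x.
  have : 0 <= x * AjB by rewrite (_ : x * AjB = D * Aj); [nra | rewrite bj; ring].
  by rewrite pmulr_lge0.
have hC : CMv = D - x - y.
  apply: (mulfI (lt0r_neq0 hD)); rewrite bC; ring.
rewrite ltNge; apply/negP => hmI.
have h1 : 0 <= AmI * (D - x - y) by nra.
have hx0 : x * AmB = 0 by nra.
have hy0 : y * AmJ = 0 by nra.
move/eqP: hx0; rewrite mulf_eq0 (negbTE (lt0r_neq0 hmB)) orbF => /eqP hx0.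
move/eqP: hy0; rewrite mulf_eq0 (negbTE (lt0r_neq0 hmJ)) orbF => /eqP hy0.
by move: hCM; rewrite hC hx0 hy0 !subr0 ltNge (ltW hD).
Qed.

Section M.
Variables (i j : nat) (t0 : R).
Hypotheses (hi : (i < n)%N) (hj : (j < n)%N) (hij : i != j) (ht0 : 1 <= t0).
Hypothesis hnp : no_parallel_edges v n.
Local Notation I := (padd (V v n i) (pscale t0 (edir v n i))).
Hypothesis hIj : on_line v n j I.
Local Notation b := (j.+1 %% n)%N.
Local Notation L := (arc_len n (j.+1 %% n) i).

Lemma modfacts : ((b + L) %% n = i /\ (b + n.-1) %% n = j /\ L.+1 < n)%N.
Proof.
rewrite /arc_len.
case: (ltnP j.+1 n) => hjn.
- rewrite (modn_small hjn).
  have ej : ((j.+1 + n.-1) %% n = j)%N.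
    have -> : (j.+1 + n.-1 = j + n)%N by lia.
    by rewrite modnDr modn_small.
  case: (ltnP j i) => hji.
  + have -> : (i + n - j.+1 = (i - j.+1) + n)%N by lia.
    rewrite modnDr (@modn_small (i - j.+1)); last by lia.
    split; last by split=> //; lia.
    rewrite modn_small; lia.
  + have hL : (i + n - j.+1 < n)%N by move: hij; rewrite neq_ltn; lia.
    rewrite (modn_small hL).
    split; last by split=> //; lia.
    have -> : (j.+1 + (i + n - j.+1) = i + n)%N by lia.
    by rewrite modnDr modn_small.
- have ejn : j.+1 = n by apply/eqP; rewrite eqn_leq hj hjn.
  rewrite -ejn modnn add0n.
  have -> : (i + j.+1 - 0 = i + j.+1)%N by lia.
  have em : (i %% j.+1 = i)%N by rewrite modn_small; lia.
  rewrite modnDr !em.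
  split; first by [].
  split; first by rewrite /= modn_small.
  move: hij; rewrite neq_ltn; lia.
Qed.


Lemma AiI : Af i I = 0.
Proof. rewrite A_move A_self /cross; case: (edir v n i) => ? ? /=; ring. Qed.

Lemma AjI : Af j I = 0.
Proof. by move: hIj; rewrite /on_line /Af => ->; rewrite oppr0. Qed.

Local Notation c := (cross (edir v n i) (edir v n j)).

Lemma c_ne0 : c != 0.
Proof. exact: hnp. Qed.

Lemma AjVi : Af j (V v n i) = - t0 * c.
Proof.
have e := AjI; rewrite A_move in e.
have hc : cross (edir v n j) (edir v n i) = - c.
  by rewrite /cross; case: (edir v n j) => ? ?; case: (edir v n i) => ? ? /=; ring.
rewrite hc in e. nra.
Qed.

Lemma c_neg : c < 0.
Proof.
have h := @conv_nonneg i j; rewrite AjVi in h.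
have ht : 0 < t0 by apply: lt_le_trans ht0; exact: ltr01.
have : c <= 0 by nra.
by rewrite le_eqVlt (negbTE c_ne0).
Qed.

Lemma L_gt0 : (0 < L)%N.
Proof.
case: (posnP L) => // hL.
have [h1 _] := modfacts; rewrite hL addn0 modn_mod in h1.
have e : (i %% n = j.+1 %% n)%N by rewrite h1 modn_small.
have := A_selfS j; rewrite -(Vmod e) AjVi => e2.
have ht : 0 < t0 by apply: lt_le_trans ht0; exact: ltr01.
have := c_neg; nra.
Qed.

Lemma Vpt_eq (P : pt R) : padd P (pscale 1 (psub (V v n i.+1) P)) = V v n i.+1.
Proof. rewrite /padd /pscale /psub; case: P => ? ?; case: (V v n i.+1) => ? ? /=; congr (_,_); ring. Qed.

Lemma far_edge k : (k < L)%N -> 0 < Af (b + k) I.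
Proof.
move=> hk.
have [mL [mj Ln]] := modfacts.
move: hk mL mj Ln; set bb := (j.+1 %% n)%N; set LL := arc_len n bb i.
clearbody bb LL => hk mL mj Ln.
have eB : ((bb + LL).+1 %% n = i.+1 %% n)%N by apply: (@modS (bb + LL) i); rewrite mL modn_small.
have eJ : ((bb + n.-1) %% n = j %% n)%N by rewrite mj modn_small.
have eI : ((bb + LL) %% n = i %% n)%N by rewrite mL modn_small.
have eM : ((bb + n.-1 + k.+1) %% n = (bb + k) %% n)%N.
  have -> : (bb + n.-1 + k.+1 = (bb + k) + n)%N by (clear_mod; lia).
  by rewrite modnDr.
case: (eqVneq LL.+2 n) => hL2.
-
  have eij : (i.+1 %% n = j %% n)%N.
    by rewrite -eB -eJ -hL2 /= addnS.
  have h0 := A_self j; rewrite (Vmod (esym eij)) VS A_add AjVi in h0.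
  have hc : cross (edir v n j) (edir v n i) = - c.
    by rewrite /cross; case: (edir v n j) => ? ?; case: (edir v n i) => ? ? /=; ring.
  rewrite hc in h0.
  have t1 : t0 = 1.
    have : c * (1 - t0) = 0 by rewrite -h0; ring.
    move/eqP; rewrite mulf_eq0 (negbTE c_ne0) /= subr_eq0 => /eqP; done.
  have -> : padd (V v n i) (pscale t0 (edir v n i)) = V v n i.+1.
    by rewrite t1 VS /padd /pscale; case: (V v n i) => ? ?; case: (edir v n i) => ? ? /=; rewrite !mul1r.
  rewrite -(Vmod eB); apply: conv_pos'; (clear_mod; lia).
- have hL3 : (LL.+2 < n)%N by rewrite ltn_neqAle hL2 Ln.
  set B := V v n i.+1; set J := V v n j; set M := V v n (bb + k).
  have AiJ : 0 < Af i J.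
    by rewrite /J -(Amod _ eI) -(Vmod eJ) ; apply: conv_pos'; (clear_mod; lia).
  have AjB : 0 < Af j B.
    have e1 : ((bb + LL).+1 + n = (bb+LL).+1 %[mod n])%N by rewrite modnDr.
    rewrite /B -(Amod _ eJ) -(Vmod eB) -(Vmod e1); apply: conv_pos'; (clear_mod; lia).
  have AmB : 0 < Af (bb + k) B by rewrite /B -(Vmod eB); apply: conv_pos'; (clear_mod; lia).
  have AmJ : 0 < Af (bb + k) J by rewrite /J -(Vmod eJ); apply: conv_pos'; (clear_mod; lia).
  have AiB : Af i B = 0 by rewrite /B A_selfS.
  have AjJ : Af j J = 0 by rewrite /J A_self.
  have AmM : Af (bb + k) M = 0 by rewrite /M A_self.
  have AiM : 0 <= Af i M by apply: conv_nonneg.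
  have AjM : 0 <= Af j M by apply: conv_nonneg.
  have CM : cross (psub J B) (psub M B) < 0.
    have := @fan (bb + LL).+1 (bb + n.-1) k ltac:((clear_mod; lia)) ltac:((clear_mod; lia)).
    by rewrite (Vmod eB) (Vmod eJ) (Vmod eM).
  have t1 : 1 < t0.
    rewrite lt_neqAle ht0 andbT; apply/eqP => t1.
    have : Af j I = Af j B.
      rewrite -t1 /B VS /padd /pscale; congr Af.
      by case: (V v n i) => ? ?; case: (edir v n i) => ? ? /=; rewrite !mul1r.
    by rewrite AjI => e; move: AjB; rewrite -e ltxx.
  have CI : cross (psub J B) (psub I B) = (t0 - 1) * Af i J.
    rewrite /B /J VS /Af /cross /psub /padd /pscale.
    case: (V v n i) => ? ?; case: (edir v n i) => ? ?; case: (V v n j) => ? ? /=; ring.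
  have DI : cross (psub B I) (psub J I) = cross (psub J B) (psub I B).
    exact: cross_DI.
  have bC := bary (psub J B) B I B J M.
  have CB : cross (psub J B) (psub B B) = 0 by apply: cross_0r.
  have CJ : cross (psub J B) (psub J B) = 0 by apply: cross_nn.
  have bi := baryA i I B J M.
  have bj := baryA j I B J M.
  have bm := baryA (bb + k) I B J M.
  rewrite DI CI CB CJ in bC.
  rewrite DI CI AiI AiB in bi.
  rewrite DI CI AjI AjJ in bj.
  rewrite DI CI AmM in bm.
  have hD : 0 < (t0 - 1) * Af i J by apply: mulr_gt0 => //; rewrite subr_gt0.
  exact: (far_arith hD AiJ AjB AmB AmJ AiM AjM CM bi bj bC bm).
Qed.

End M.
End S.


Lemma qc_lower (R : rcfType) (u1 w1 u3 w3 m p q : R) :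
  0 <= u1 -> 0 <= w1 -> 0 <= u3 -> 0 <= w3 -> 0 <= m -> 0 < p -> 0 < q ->
  m <= u1 * w1 -> m <= u3 * w3 -> u3 * w1 < u1 * w3 ->
  (p + q) ^+ 2 * m < (q * u1 + p * u3) * (q * w1 + p * w3).
Proof.
move=> hu1 hw1 hu3 hw3 hm hp hq h1 h3 hr.
set s := u1 * w3 + u3 * w1.
have hs0 : 0 <= s by rewrite /s; apply: addr_ge0; apply: mulr_ge0.
have hprod : m * m <= (u1 * w1) * (u3 * w3) by apply: ler_pM.
have hsq : 4 * ((u1 * w1) * (u3 * w3)) < s * s.
  have -> : s * s = 4 * ((u1 * w1) * (u3 * w3)) + (u1 * w3 - u3 * w1) ^+ 2 by rewrite /s; ring.
  rewrite ltrDl exprn_gt0 // subr_gt0 //.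
have hs : 2 * m < s.
  rewrite ltNge; apply/negP => hle.
  have : s * s <= (2 * m) * (2 * m) by apply: ler_pM.
  by rewrite leNgt (le_lt_trans _ hsq) //; nra.
have -> : (q * u1 + p * u3) * (q * w1 + p * w3) = q ^+ 2 * (u1 * w1) + p ^+ 2 * (u3 * w3) + p * q * s.
  by rewrite /s; ring.
have -> : (p + q) ^+ 2 * m = q ^+ 2 * m + p ^+ 2 * m + p * q * (2 * m) by ring.
apply: ler_ltD; first apply: lerD; try (apply: ler_wpM2l => //; exact: sqr_ge0).
by rewrite ltr_pM2l // mulr_gt0.
Qed.

Lemma qc_arith (R : rcfType) (c g al be u1 w1 u2 w2 u3 w3 A1 A3 : R) :
 c < 0 -> 0 < g -> 0 <= u1 -> 0 <= w1 -> 0 <= u2 -> 0 <= w2 -> 0 <= u3 -> 0 <= w3 ->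
 0 <= A1 -> 0 <= A3 ->
 c * (A1 - g) = al * w1 - be * u1 ->
 c * (0 - g) = al * w2 - be * u2 ->
 c * (A3 - g) = al * w3 - be * u3 ->
 u2 * w1 < u1 * w2 -> u3 * w2 < u2 * w3 -> u3 * w1 < u1 * w3 ->
 u1 * w1 < u2 * w2 \/ u3 * w3 < u2 * w2.
Proof.
move=> hc hg hu1 hw1 hu2 hw2 hu3 hw3 hA1 hA3 e1 e2 e3 h12 h23 h13.
set G := - (c * g).
have hG : 0 < G by rewrite /G oppr_gt0 nmulr_rlt0.
have hcA1 : c * A1 <= 0 by rewrite nmulr_rle0.
have hcA3 : c * A3 <= 0 by rewrite nmulr_rle0.
have P1 : al * w1 - be * u1 <= G by rewrite -e1 /G; lra.
have P3 : al * w3 - be * u3 <= G by rewrite -e3 /G; lra.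
have P2 : al * w2 - be * u2 = G by rewrite -e2 /G; ring.
set p := u1 * w2 - u2 * w1. set q := u2 * w3 - u3 * w2.
have hp : 0 < p by rewrite subr_gt0.
have hq : 0 < q by rewrite subr_gt0.
set U := q * u1 + p * u3. set W := q * w1 + p * w3.
have hU : 0 <= U by rewrite /U; apply: addr_ge0; apply: mulr_ge0 => //; apply: ltW.
have hW : 0 <= W by rewrite /W; apply: addr_ge0; apply: mulr_ge0 => //; apply: ltW.
have eUW : U * w2 = W * u2 by rewrite /U /W /p /q; ring.
have hPhi : al * W - be * U <= (p + q) * G.
  have -> : al * W - be * U = q * (al * w1 - be * u1) + p * (al * w3 - be * u3) by rewrite /U /W; ring.
  have -> : (p + q) * G = q * G + p * G by ring.
  by apply: lerD; apply: ler_wpM2l => //; apply: ltW.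
have eu : (al * W - be * U) * u2 = U * G.
  have h : al * W * u2 = al * (U * w2) by rewrite eUW mulrA.
  by rewrite -P2 mulrBl h; ring.
have ew : (al * W - be * U) * w2 = W * G.
  have h : be * U * w2 = be * (W * u2) by rewrite -eUW mulrA.
  by rewrite -P2 mulrBl h; ring.
have hUb : U <= (p + q) * u2.
  rewrite -(ler_pM2r hG) -eu mulrAC; apply: ler_wpM2r => //.
have hWb : W <= (p + q) * w2.
  rewrite -(ler_pM2r hG) -ew mulrAC; apply: ler_wpM2r => //.
have hUW : U * W <= (p + q) ^+ 2 * (u2 * w2).
  have -> : (p + q) ^+ 2 * (u2 * w2) = ((p + q) * u2) * ((p + q) * w2) by ring.
  by apply: ler_pM.
case: (ltP (u1 * w1) (u2 * w2)) => h1; first by left.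
case: (ltP (u3 * w3) (u2 * w2)) => h3; first by right.
have := @qc_lower R u1 w1 u3 w3 (u2 * w2) p q hu1 hw1 hu3 hw3 (mulr_ge0 hu2 hw2) hp hq h1 h3 h13.
by rewrite -/U -/W => /(lt_le_trans) /(_ hUW); rewrite ltxx.
Qed.


Lemma psi_lt (R : rcfType) (u w u' w' : R) : 0 < u + w -> 0 < u' + w' ->
  u' * w < u * w' -> u' / (u' + w') < u / (u + w).
Proof.
move=> h1 h2 h; rewrite ltr_pdivrMr // mulrAC ltr_pdivlMr //.
have -> : u' * (u + w) = u' * u + u' * w by ring.
have -> : u * (u' + w') = u' * u + u * w' by ring.
by rewrite ltrD2l.
Qed.

Lemma psi_lt_inv (R : rcfType) (u w u' w' : R) : 0 < u + w -> 0 < u' + w' ->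
  u' / (u' + w') < u / (u + w) -> u' * w < u * w'.
Proof.
move=> h1 h2 h; move: h; rewrite ltr_pdivrMr // mulrAC ltr_pdivlMr //.
have -> : u' * (u + w) = u' * u + u' * w by ring.
have -> : u * (u' + w') = u' * u + u * w' by ring.
by rewrite ltrD2l.
Qed.

Lemma natA (n bb LL : nat) : (LL.+1 < n)%N -> (0 < LL)%N ->
  ((bb + LL).+1 < bb + n)%N /\ (bb + n < bb + LL + n)%N.
Proof. move=> h1 h2; split; lia. Qed.

Lemma natB (n bb : nat) : (2 < n)%N ->
  ((bb + n.-1).+1 < bb + n + 1)%N /\ (bb + n + 1 < bb + n.-1 + n)%N.
Proof. move=> h; split; lia. Qed.

Lemma ivt_nat (R : rcfType) (f : nat -> R) N : (0 < N)%N -> f 0%N <= 0 -> 0 <= f N ->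
  exists k, [/\ (k < N)%N, f k <= 0 & 0 <= f k.+1].
Proof.
elim: N => // N IH _ h0 hN.
case: (leP (f N) 0) => hfN; first by exists N.
case: (posnP N) => hN0.
  by move: hfN; rewrite hN0 ltNge h0.
have [k [hk h1 h2]] := IH hN0 h0 (ltW hfN).
by exists k; split => //; apply: ltnW.
Qed.

Lemma ivt_lin (R : rcfType) (h0 h1 : R) : h0 <= 0 -> 0 <= h1 ->
  exists s, [/\ 0 <= s, s <= 1 & (1 - s) * h0 + s * h1 = 0].
Proof.
move=> H0 H1; case: (eqVneq h0 0) => e0.
  by exists 0; split; rewrite ?lexx ?ler01 // e0; ring.
have hn : h0 < 0 by rewrite lt_def eq_sym e0 H0.
have hd : h0 - h1 < 0 by lra.
exists (h0 / (h0 - h1)); split.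
- by rewrite ler_ndivlMr // mul0r ltW.
- by rewrite ler_ndivrMr // mul1r; lra.
- by field; exact: ltr0_neq0.
Qed.

Lemma uw_match (R : rcfType) (c g al be uX wX uZ wZ AZ : R) :
  0 < uZ -> 0 < wZ -> 0 <= uX -> 0 <= wX -> uZ * wX = uX * wZ -> c < 0 -> 0 < g -> 0 <= AZ ->
  c * (0 - g) = al * wX - be * uX -> c * (AZ - g) = al * wZ - be * uZ ->
  uX * wX <= uZ * wZ -> uX = uZ /\ wX = wZ.
Proof.
move=> huZ hwZ huX hwX e hc hg hAZ eX eZ hle.
set G := - (c * g).
have hG : 0 < G by rewrite /G oppr_gt0 nmulr_rlt0.
have hcA : c * AZ <= 0 by rewrite nmulr_rle0.
set S := al * wZ - be * uZ.
have hS : S <= G by rewrite /S -eZ /G; lra.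
have eG : G = al * wX - be * uX by rewrite -eX /G; ring.
have e1 : uX * S = uZ * G.
  rewrite eG /S; have -> : uX * (al * wZ - be * uZ) = al * (uX * wZ) - be * uX * uZ by ring.
  rewrite -e; ring.
have e2 : wX * S = wZ * G.
  rewrite eG /S; have -> : wX * (al * wZ - be * uZ) = al * wX * wZ - be * (uZ * wX) by ring.
  rewrite e; ring.
have hu : uZ <= uX.
  rewrite -(ler_pM2r hG) -e1; apply: ler_wpM2l => //.
have hw : wZ <= wX.
  rewrite -(ler_pM2r hG) -e2; apply: ler_wpM2l => //.
split; nra.
Qed.

Section A.
Variable R : rcfType.
Variable v : nat -> pt R.
Variable n : nat.
Hypothesis n_gt0 : (0 < n)%N.
Hypothesis hconv : convex_cw_polygon v n.
Variables (i j : nat) (t0 : R).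
Hypotheses (hi : (i < n)%N) (hj : (j < n)%N) (hij : i != j) (ht0 : 1 <= t0).
Hypothesis hnp : no_parallel_edges v n.
Local Notation I := (padd (V v n i) (pscale t0 (edir v n i))).
Hypothesis hIj : on_line v n j I.
Local Notation b := (j.+1 %% n)%N.
Local Notation L := (arc_len n (j.+1 %% n) i).
Local Notation c := (cross (edir v n i) (edir v n j)).
Local Notation E k s := (padd (V v n (b + k)) (pscale s (edir v n (b + k)))).
Local Notation Af := (Af v n).

Let far k := @far_edge R v n n_gt0 hconv i j t0 hi hj hij ht0 hnp hIj k.
Let cneg := @c_neg R v n n_gt0 hconv i j t0 hi hj hij ht0 hnp hIj.
Let Lgt0 := @L_gt0 R v n n_gt0 hconv i j t0 hi hj hij ht0 hnp hIj.
Let AiI' := @AiI R v n i t0.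
Let AjI' := @AjI R v n i j t0 hIj.

Lemma E1 k : E k 1 = E k.+1 0.
Proof.
rewrite addnS VS /padd /pscale; case: (V v n (b + k)) => ? ?;
  case: (edir v n (b + k)) => ? ?; case: (edir v n (b + k).+1) => ? ? /=; congr (_,_); ring.
Qed.

Lemma E0 k : E k 0 = V v n (b + k).
Proof. rewrite /padd /pscale; case: (V v n (b + k)) => ? ?; case: (edir v n (b + k)) => ? ? /=; congr (_,_); ring. Qed.

Lemma arc_norm t X : on_arc v n b i t X ->
  exists k s, [/\ (k < L)%N, 0 <= s, s <= 1, t = k%:R + s & X = E k s].
Proof.
case=> k [s [[hk | [hk hs]] [hs0 [hs1 [-> ->]]]]].
  by exists k, s.
exists L.-1, 1; split.
- by rewrite ltn_predL.
- exact: ler01.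
- exact: lexx.
- by rewrite hk hs addr0 natr1 prednK.
- by rewrite E1 prednK // hk hs.
Qed.

Lemma AE q k s : Af q (E k s) = (1 - s) * Af q (V v n (b + k)) + s * Af q (V v n (b + k).+1).
Proof. rewrite A_move VS A_add; ring. Qed.

Lemma AE_ge0 q k s : 0 <= s -> s <= 1 -> 0 <= Af q (E k s).
Proof.
move=> h0 h1; rewrite AE; apply: addr_ge0; apply: mulr_ge0 => //;
  try exact: conv_nonneg; by rewrite subr_ge0.
Qed.

Lemma AE_self k s : Af (b + k) (E k s) = 0.
Proof.
rewrite A_move A_self /cross; case: (edir v n (b + k)) => ? ? /=; ring.
Qed.

Lemma E_inP k s : 0 <= s -> s <= 1 -> inP v n (E k s).
Proof. by move=> h0 h1 q _; rewrite cross_sub_A oppr_le0; apply: AE_ge0. Qed.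

Lemma pl m X : c * (Af m X - Af m I) = cross (edir v n i) (edir v n m) * Af j X
  - cross (edir v n j) (edir v n m) * Af i X.
Proof. by rewrite pluecker AiI' AjI' !subr0. Qed.

Lemma uw_pos k s : (k < L)%N -> 0 <= s -> s <= 1 -> 0 < Af i (E k s) + Af j (E k s).
Proof.
move=> hk h0 h1.
have hu := AE_ge0 i k h0 h1; have hw := AE_ge0 j k h0 h1.
rewrite lt_def addr_ge0 // andbT; apply/negP => /eqP e.
have eu : Af i (E k s) = 0 by apply/eqP; rewrite eq_le hu andbT -(lerD2r (Af j (E k s))) e add0r.
have ew : Af j (E k s) = 0 by move: e; rewrite eu add0r.
have := pl (b + k) (E k s); rewrite eu ew AE_self !mulr0 subr0 sub0r => /eqP.
rewrite mulrN oppr_eq0 mulf_eq0 (negbTE (lt0r_neq0 (far hk))) orbF.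
by rewrite (negbTE (ltr0_neq0 cneg)).
Qed.


Definition psi (X : pt R) := Af i X / (Af i X + Af j X).

Lemma edge_cross k s s' : (k < L)%N -> 0 <= s -> s < s' -> s' <= 1 ->
  Af i (E k s') * Af j (E k s) < Af i (E k s) * Af j (E k s').
Proof.
move=> hk h0 hss h1.
have key : Af i (E k s) * Af j (E k s') - Af i (E k s') * Af j (E k s)
   = (s' - s) * (c * (Af (b + k) (E k s) - Af (b + k) I)).
  rewrite pl !A_move; ring.
rewrite -subr_gt0 key AE_self sub0r; apply: mulr_gt0.
  by rewrite subr_gt0.
by rewrite mulrN -mulNr; apply: mulr_gt0; [rewrite oppr_gt0; exact: cneg | exact: far].
Qed.

Lemma psi_edge k s s' : (k < L)%N -> 0 <= s -> s < s' -> s' <= 1 ->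
  psi (E k s') < psi (E k s).
Proof.
move=> hk h0 hss h1; have h0' : 0 <= s' by apply: le_trans h0 (ltW hss).
have h1' : s <= 1 by apply: le_trans (ltW hss) h1.
apply: psi_lt; [exact: uw_pos | exact: uw_pos | exact: edge_cross].
Qed.

Definition phi k := psi (V v n (b + k)).

Lemma phi_step k : (k < L)%N -> phi k.+1 < phi k.
Proof.
move=> hk; rewrite /phi -(E0 k) -(E0 k.+1) -E1.
apply: psi_edge => //; exact: ltr01.
Qed.

Lemma phi_dec k d : (k + d.+1 <= L)%N -> phi (k + d.+1) < phi k.
Proof.
elim: d => [|d IH] h.
  by move: h; rewrite addn1 => h; exact: phi_step.
move: h; rewrite addnS => h.
apply: lt_trans (IH (ltnW h)); exact: phi_step.
Qed.

Lemma phi_le k k' : (k <= k')%N -> (k' <= L)%N -> phi k' <= phi k.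
Proof.
rewrite leq_eqVlt => /orP [/eqP -> _|hkk hk']; first exact: lexx.
have e : k' = (k + (k' - k.+1).+1)%N by rewrite subnSK // subnKC // ltnW.
move: hk'; rewrite e => hk'; exact/ltW/phi_dec.
Qed.

Lemma psi_top k s : (k < L)%N -> 0 <= s -> s <= 1 -> psi (E k s) <= phi k ?= iff (s == 0).
Proof.
move=> hk h0 h1; have -> : phi k = psi (E k 0) by rewrite /phi E0.
case: (eqVneq s 0) => [->|hs]; first by split; rewrite ?lexx ?eqxx.
have hlt : psi (E k s) < psi (E k 0) by apply: psi_edge => //; rewrite lt_def hs h0.
by split; [exact: ltW | rewrite (lt_eqF hlt)].
Qed.

Lemma psi_bot k s : (k < L)%N -> 0 <= s -> s <= 1 -> phi k.+1 <= psi (E k s) ?= iff (s == 1).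
Proof.
move=> hk h0 h1; have -> : phi k.+1 = psi (E k 1) by rewrite /phi E1 E0.
case: (eqVneq s 1) => [->|hs]; first by split; rewrite ?lexx ?eqxx.
have hlt : psi (E k 1) < psi (E k s) by apply: psi_edge => //; rewrite lt_def eq_sym hs h1.
by split; [exact: ltW | rewrite (lt_eqF hlt)].
Qed.


Lemma phi_lt k k' : (k < k')%N -> (k' <= L)%N -> phi k' < phi k.
Proof.
move=> hkk hk'.
have e : k' = (k + (k' - k.+1).+1)%N by rewrite subnSK // subnKC // ltnW.
move: hk'; rewrite e => hk'; exact: phi_dec.
Qed.

Lemma arc_order_n k1 s1 k2 s2 : (k1 < L)%N -> 0 <= s1 -> s1 <= 1 ->
  (k2 < L)%N -> 0 <= s2 -> s2 <= 1 -> k1%:R + s1 < k2%:R + s2 ->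
  psi (E k2 s2) < psi (E k1 s1).
Proof.
move=> hk1 h10 h11 hk2 h20 h21 ht.
case: (ltngtP k1 k2) => hk.
- have b1 := psi_bot hk1 h10 h11.
  have t2 := psi_top hk2 h20 h21.
  case: (eqVneq s1 1) => hs1.
  + move: ht b1; rewrite hs1 => ht b1.
    have ep : phi k1.+1 = psi (E k1 1) by apply/eqP; rewrite b1 eqxx.
    rewrite -ep.
    move: hk; rewrite leq_eqVlt => /orP [/eqP ek|hk'].
      rewrite ek.
      have hs2 : s2 != 0.
        apply/eqP => e2; move: ht; rewrite e2 -ek addr0 natr1 ltxx //.
      by rewrite (lt_leif t2) hs2.
    by apply: le_lt_trans (phi_lt hk' (ltnW hk2)); apply: t2.
  + apply: le_lt_trans (t2 : _ <= _) _.
    apply: le_lt_trans (phi_le hk (ltnW hk2)) _.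
    by rewrite (lt_leif b1) hs1.
- have : (k2.+1%:R : R) <= k1%:R by rewrite ler_nat.
  rewrite -natr1 => h; exfalso; move: ht; lra.
- rewrite hk in ht *; apply: psi_edge => //; lra.
Qed.

Lemma arc_order t1 t2 X1 X2 : on_arc v n b i t1 X1 -> on_arc v n b i t2 X2 -> t1 < t2 ->
  psi X2 < psi X1.
Proof.
move=> /arc_norm [k1 [s1 [hk1 h10 h11 -> ->]]] /arc_norm [k2 [s2 [hk2 h20 h21 -> ->]]].
exact: arc_order_n.
Qed.


Let Amod' := @Amod R v n.
Let Vmod' := @Vmod R v n.
Let convp := @conv_pos' R v n n_gt0 hconv.
Let convn := @conv_nonneg R v n n_gt0 hconv.

Lemma arc_facts t X : on_arc v n b i t X ->
  [/\ forall q, 0 <= Af q X, 0 < Af i X + Af j X, inP v n X &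
      exists k s, [/\ (k < L)%N, 0 <= s, s <= 1, t = k%:R + s & X = E k s]].
Proof.
move=> /arc_norm [k [s [hk h0 h1 -> ->]]]; split.
- by move=> q; apply: AE_ge0.
- exact: uw_pos.
- exact: E_inP.
- by exists k, s.
Qed.

Lemma edir_ne0 k : 0 < dot (edir v n k) (edir v n k).
Proof.
have h3 : (3 <= n)%N by case: hconv.
have hp : 0 < Af k (V v n (k.+2)) by apply: convp; lia.
move: hp; rewrite /Af /dot /cross; case: (edir v n k) => a b' /= hp.
rewrite ltNge; apply/negP => hle.
have ha : a * a <= 0 by nra.
have hb : b' * b' <= 0 by nra.
have ea : a = 0 by nra.
have eb : b' = 0 by nra.
by move: hp; rewrite ea eb !mul0r subr0 oppr0 ltxx.
Qed.

Local Notation Nk k := (Num.sqrt (dot (edir v n k) (edir v n k))).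
Local Notation K := ((Nk i * Nk j)^-1).

Lemma K_gt0 : 0 < K.
Proof. by rewrite invr_gt0; apply: mulr_gt0; rewrite sqrtr_gt0 edir_ne0. Qed.

Lemma dl_eq k X : 0 <= Af k X -> dl v n k X = Af k X / Nk k.
Proof.
move=> h; rewrite /dl /dist_line -/(edir v n k).
by rewrite cross_sub_A normrN ger0_norm.
Qed.

Lemma dp_eq X : 0 <= Af i X -> 0 <= Af j X -> disprod v n i j X = (Af i X * Af j X) * K.
Proof.
by move=> h1 h2; rewrite /disprod !dl_eq // mulrACA invfM.
Qed.

Lemma G_arc t1 t2 t3 X1 X2 X3 : on_arc v n b i t1 X1 -> on_arc v n b i t2 X2 ->
  on_arc v n b i t3 X3 -> t1 < t2 -> t2 < t3 ->
  disprod v n i j X1 < disprod v n i j X2 \/ disprod v n i j X3 < disprod v n i j X2.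
Proof.
move=> a1 a2 a3 h12 h23.
have [p1 s1 _ _] := arc_facts a1.
have [p2 s2 _ [k [s [hk hs0 hs1 _ eX2]]]] := arc_facts a2.
have [p3 s3 _ _] := arc_facts a3.
have o12 := psi_lt_inv s1 s2 (arc_order a1 a2 h12).
have o23 := psi_lt_inv s2 s3 (arc_order a2 a3 h23).
have o13 := psi_lt_inv s1 s3 (arc_order a1 a3 (lt_trans h12 h23)).
have e2 : c * (0 - Af (b + k) I) = cross (edir v n i) (edir v n (b + k)) * Af j X2
  - cross (edir v n j) (edir v n (b + k)) * Af i X2.
  by rewrite -pl eX2 AE_self.
have := qc_arith cneg (far hk) (p1 i) (p1 j) (p2 i) (p2 j) (p3 i) (p3 j)
  (p1 (b + k)) (p3 (b + k)) (pl _ _) e2 (pl _ _) o12 o23 o13.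
rewrite !dp_eq //; case=> h; [left | right]; by rewrite ltr_pM2r // K_gt0.
Qed.


Lemma A_diff k X Y : Af k X - Af k Y = - cross (edir v n k) (psub X Y).
Proof.
rewrite /Af /cross /psub; case: X => ? ?; case: Y => ? ?; case: (edir v n k) => ? ?;
  case: (V v n k) => ? ? /=; ring.
Qed.

Lemma pt_eq (X Y : pt R) : psub X Y = (0, 0) -> X = Y.
Proof.
case: X => a b'; case: Y => c' d; rewrite /psub /= => [[/eqP e1 /eqP e2]].
by move: e1 e2; rewrite !subr_eq0 => /eqP -> /eqP ->.
Qed.

Lemma same_uw X Y : Af i X = Af i Y -> Af j X = Af j Y -> X = Y.
Proof.
move=> e1 e2; apply: pt_eq; apply: (inj2 (c_ne0 hi hj hij hnp)).
  by apply/eqP; rewrite -oppr_eq0 -A_diff e1 subrr.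
by apply/eqP; rewrite -oppr_eq0 -A_diff e2 subrr.
Qed.

Lemma ex_ks N (t : R) : (0 < N)%N -> 0 <= t -> t <= N%:R ->
  exists k s, [/\ (k < N)%N, 0 <= s, s <= 1 & t = k%:R + s].
Proof.
elim: N t => // N IH t _ h0 h1.
case: (posnP N) => hN.
  exists 0%N, t; split => //; last by rewrite add0r.
  by move: h1; rewrite hN.
case: (leP t N%:R) => ht.
  by have [k [s [hk ? ? ?]]] := IH t hN h0 ht; exists k, s; split => //; apply: ltnW.
exists N, (t - N%:R); split => //.
- by rewrite subr_ge0 ltW.
- by move: h1; rewrite -natr1 => h1; lra.
- by rewrite addrC subrK.
Qed.

Lemma arc_exists (t : R) : 0 <= t -> t <= L%:R -> exists X, on_arc v n b i t X.
Proof.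
move=> h0 h1; have [k [s [hk hs0 hs1 ->]]] := ex_ks Lgt0 h0 h1.
by exists (E k s), k, s; split; [left | split => //].
Qed.

Lemma arc_range t X : on_arc v n b i t X -> 0 <= t /\ t <= L%:R.
Proof.
move=> /arc_facts [_ _ _ [k [s [hk h0 h1 -> _]]]]; split.
  by apply: addr_ge0.
have : (k.+1%:R : R) <= L%:R by rewrite ler_nat.
rewrite -natr1 => h; lra.
Qed.

Lemma arc_unique t X X' : on_arc v n b i t X -> on_arc v n b i t X' -> X = X'.
Proof.
move=> /arc_facts [_ _ _ [k [s [hk h0 h1 -> ->]]]].
move=> /arc_facts [_ _ _ [k' [s' [hk' h0' h1' e ->]]]].
wlog hkk : k s k' s' hk h0 h1 hk' h0' h1' e / (k <= k')%N.
  move=> W; case: (leqP k k') => h; first exact: W.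
  symmetry; apply: W => //; try exact: ltnW; by rewrite e.
move: hkk; rewrite leq_eqVlt => /orP [/eqP ek|hlt].
  by rewrite -ek in e *; have -> : s = s' by lra.
case: (leqP k'  k.+1) => hk2.
  have ek : k' = k.+1 by apply/eqP; rewrite eqn_leq hk2 hlt.
  rewrite ek -natr1 in e.
  have -> : s = 1 by lra.
  have -> : s' = 0 by lra.
  by rewrite E1 ek.
have : (k.+2%:R : R) <= k'%:R by rewrite ler_nat.
rewrite -natr1 -natr1 => h; exfalso; lra.
Qed.

Section ZS.
Variable Z : pt R.
Hypothesis hZ : inP v n Z.
Hypothesis hmax : forall X, inP v n X -> disprod v n i j X <= disprod v n i j Z.

Lemma AZ_ge0 q : 0 <= Af q Z.
Proof.
have e : (q %% n = (q %% n) %% n)%N by rewrite modn_mod.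
rewrite (Amod' Z e) -oppr_le0 -cross_sub_A; apply: hZ; exact: ltn_pmod.
Qed.

Lemma Z_pos : 0 < Af i Z /\ 0 < Af j Z.
Proof.
have [mL [mj Ln]] := modfacts n_gt0 hi hj hij ht0.
have h3 : (2 < n)%N by case: hconv.
set M := E 0 (1/2).
have hh0 : (0 : R) <= 1/2 by rewrite divr_ge0 ?ler01 ?ler0n.
have hh1 : (1 : R)/2 <= 1 by rewrite ler_pdivrMr ?ltr0n // mul1r ler1n.
have hM := E_inP 0 hh0 hh1.
have huM : 0 < Af i M.
  rewrite /M AE.
  have e1 : (i %% n = (b + L) %% n)%N by rewrite mL modn_small.
  have e2 : ((b + 0) %% n = (b + n) %% n)%N by rewrite addn0 modnDr.
  have hp : 0 < Af i (V v n (b + 0)).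
    rewrite (Amod' _ e1) (Vmod' e2); have [? ?] := natA b Ln Lgt0; exact: convp.
  have hq := convn (b + 0).+1 i.
  have hs : (0 : R) < 1 - 1/2 by rewrite subr_gt0 ltr_pdivrMr ?ltr0n // mul1r ltr1n.
  have := mulr_gt0 hs hp; have := mulr_ge0 hh0 hq; lra.
have hwM : 0 < Af j M.
  rewrite /M AE.
  have e1 : (j %% n = (b + n.-1) %% n)%N by rewrite mj modn_small.
  have e2 : ((b + 0).+1 %% n = (b + n + 1) %% n)%N by rewrite addn0 -addnA (addnC n 1) addnA modnDr addn1.
  have hp : 0 < Af j (V v n (b + 0).+1).
    rewrite (Amod' _ e1) (Vmod' e2); have [? ?] := natB b h3; exact: convp.
  have hq := convn (b + 0) j.
  have hs : (0 : R) < 1/2 by rewrite divr_gt0 ?ltr01 ?ltr0n.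
  have hh2 : (0:R) <= 1 - 1/2 by rewrite subr_ge0.
  have := mulr_gt0 hs hp; have := mulr_ge0 hh2 hq; lra.
have hle := hmax hM.
rewrite (dp_eq (ltW huM) (ltW hwM)) (dp_eq (AZ_ge0 i) (AZ_ge0 j)) (ler_pM2r K_gt0) in hle.
have hpos : 0 < Af i Z * Af j Z by apply: lt_le_trans hle; apply: mulr_gt0.
have hu := AZ_ge0 i; have hw := AZ_ge0 j.
split; rewrite lt_def; [rewrite hu andbT | rewrite hw andbT]; apply/eqP => e;
  by move: hpos; rewrite e ?mul0r ?mulr0 ltxx.
Qed.

Lemma Z_on_arc : exists tZ, on_arc v n b i tZ Z.
Proof.
have [mL [mj Ln]] := modfacts n_gt0 hi hj hij ht0.
have [huZ hwZ] := Z_pos.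
pose f k := Af i Z * Af j (V v n (b + k)) - Af i (V v n (b + k)) * Af j Z.
have f0 : f 0%N <= 0.
  have e : ((b + 0) %% n = j.+1 %% n)%N by rewrite addn0 modn_mod.
  rewrite /f (Vmod' e) A_selfS mulr0 sub0r oppr_le0; apply: mulr_ge0; first exact: convn.
  exact: ltW.
have fL : 0 <= f L.
  have e : ((b + L) %% n = i %% n)%N by rewrite mL modn_small.
  rewrite /f (Vmod' e) A_self mul0r subr0; apply: mulr_ge0; [exact: ltW | exact: convn].
have [k [hk fk fk1]] := ivt_nat Lgt0 f0 fL.
have [s [hs0 hs1 hs]] := ivt_lin fk fk1.
set X := E k s.
have eX : Af i Z * Af j X = Af i X * Af j Z.
  apply/eqP; rewrite -subr_eq0; apply/eqP; rewrite -hs /f /X !AE addnS; ring.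
have hX := E_inP k hs0 hs1.
have [eu ew] : Af i X = Af i Z /\ Af j X = Af j Z.
  apply: (@uw_match R c (Af (b + k) I) (cross (edir v n i) (edir v n (b + k)))
    (cross (edir v n j) (edir v n (b + k))) _ _ _ _ _ huZ hwZ (AE_ge0 i k hs0 hs1) (AE_ge0 j k hs0 hs1) eX cneg (far hk) (AZ_ge0 (b + k))).
  - by rewrite -pl /X AE_self.
  - exact: pl.
  - have hle := hmax hX.
    by rewrite (dp_eq (AE_ge0 i k hs0 hs1) (AE_ge0 j k hs0 hs1)) (dp_eq (AZ_ge0 i) (AZ_ge0 j)) (ler_pM2r K_gt0) in hle.
have eXZ := same_uw eu ew.
exists (k%:R + s), k, s; split; first by left.
by split=> //; split=> //; split=> //; rewrite -eXZ.
Qed.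

End ZS.

Lemma main_sec (Z : pt R) : inP v n Z ->
  (forall X, inP v n X -> disprod v n i j X <= disprod v n i j Z) ->
  exists tZ : R,
    on_arc v n b i tZ Z /\
    (forall (t1 t2 : R) (X1 X2 : pt R),
        on_arc v n b i t1 X1 -> on_arc v n b i t2 X2 ->
        t1 < t2 -> t2 <= tZ -> disprod v n i j X1 < disprod v n i j X2) /\
    (forall (t1 t2 : R) (X1 X2 : pt R),
        on_arc v n b i t1 X1 -> on_arc v n b i t2 X2 ->
        tZ <= t1 -> t1 < t2 -> disprod v n i j X2 < disprod v n i j X1).
Proof.
move=> hZ hmax; have [tZ aZ] := Z_on_arc hZ hmax.
have inPa t X : on_arc v n b i t X -> inP v n X by case/arc_facts.
have mid t1 t2 X1 X2 : on_arc v n b i t1 X1 -> on_arc v n b i t2 X2 -> t1 < t2 ->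
    exists X', exists t', [/\ on_arc v n b i t' X', t1 < t' & t' < t2].
  move=> a1 a2 h; have [r10 r11] := arc_range a1; have [r20 r21] := arc_range a2.
  have [X' a'] := @arc_exists ((t1 + t2) / 2) ltac:(lra) ltac:(lra).
  by exists X', ((t1 + t2) / 2); split => //; lra.
exists tZ; split => //; split.
- move=> t1 t2 X1 X2 a1 a2 h12; rewrite le_eqVlt => /orP [/eqP e | hlt].
  + move: a2; rewrite e => a2; have eX := arc_unique a2 aZ; rewrite eX.
    rewrite e in h12; have [X' [t' [a' h1' h2']]] := mid _ _ _ _ a1 aZ h12.
    have := G_arc a1 a' aZ h1' h2'; case=> h.
      by apply: lt_le_trans h (hmax _ (inPa _ _ a')).
    by exfalso; move: h; rewrite ltNge hmax //; apply: inPa a'.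
  + have := G_arc a1 a2 aZ h12 hlt; case=> h //.
    by exfalso; move: h; rewrite ltNge hmax //; apply: inPa a2.
- move=> t1 t2 X1 X2 a1 a2; rewrite le_eqVlt => /orP [/eqP e | hlt] h12.
  + move: a1; rewrite -e => a1; have eX := arc_unique a1 aZ; rewrite eX.
    rewrite -e in h12; have [X' [t' [a' h1' h2']]] := mid _ _ _ _ aZ a2 h12.
    have := G_arc aZ a' a2 h1' h2'; case=> h.
      by exfalso; move: h; rewrite ltNge hmax //; apply: inPa a'.
    by apply: lt_le_trans h (hmax _ (inPa _ _ a')).
  + have := G_arc aZ a1 a2 hlt h12; case=> h //.
    by exfalso; move: h; rewrite ltNge hmax //; apply: inPa a1.
Qed.

End A.

Theorem lemma5 (R : rcfType) (n : nat) (v : nat -> pt R) (i j : nat) (Z : pt R) :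
  convex_cw_polygon v n ->
  no_parallel_edges v n ->
  (i < n)%N -> (j < n)%N ->
  prec v n i j ->
  (* Z = Z_i^j : a (the) maximizer of disprod_{l_i,l_j} over P *)
  inP v n Z ->
  (forall X, inP v n X -> disprod v n i j X <= disprod v n i j Z) ->
  exists tZ : R,
    on_arc v n (j.+1 %% n) i tZ Z /\
    (forall (t1 t2 : R) (X1 X2 : pt R),
        on_arc v n (j.+1 %% n) i t1 X1 -> on_arc v n (j.+1 %% n) i t2 X2 ->
        t1 < t2 -> t2 <= tZ -> disprod v n i j X1 < disprod v n i j X2) /\
    (forall (t1 t2 : R) (X1 X2 : pt R),
        on_arc v n (j.+1 %% n) i t1 X1 -> on_arc v n (j.+1 %% n) i t2 X2 ->
        tZ <= t1 -> t1 < t2 -> disprod v n i j X2 < disprod v n i j X1).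
Proof.
move=> hconv hnp hi hj [hij [t0 [ht0 hIj]]] hZ hmax.
have n_gt0 : (0 < n)%N by case: hconv => h _; apply: leq_trans h.
exact: (main_sec n_gt0 hconv hi hj hij ht0 hnp hIj hZ hmax).
Qed.
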